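(* Let $\alpha,\beta,\sigma>0$ and let $X\sim\mathcal{N}(\alpha,\sigma^2)$. Then $$\mathbb{E}\left[\tanh\left(\frac{\beta X}{\sigma^2}\right)\right]\ge 1-\exp\left(-\frac{\min(\alpha,\beta)\cdot\alpha}{2\sigma^2}\right).$$ *)

(* Defs.v *)
From HB Require Import structures.
From mathcomp Require Import all_boot all_order all_algebra.
From mathcomp Require Import all_classical all_reals all_analysis.
Set Implicit Arguments. Unset Strict Implicit. Unset Printing Implicit Defensive.
Import Order.TTheory GRing.Theory Num.Theory.
Local Open Scope ring_scope.

Definition tanh {R : realType} (x : R) : R :=
  (expR x - expR (- x)) / (expR x + expR (- x)).

(* Main.v *)
Set Warnings "-notation-overridden,-ambiguous-paths,-notation-incompatible-prefix".
Require Import Defs.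
From HB Require Import structures.
From mathcomp Require Import all_boot all_order all_algebra.
From mathcomp Require Import all_classical all_reals all_analysis.
Import Order.TTheory GRing.Theory Num.Theory.
Local Open Scope ring_scope.
From mathcomp Require Import measurable_realfun.
From mathcomp Require Import ring lra.
Import numFieldNormedType.Exports.

Section Helpers.
Context {R : realType}.
Local Notation tanh := (@tanh R).
Local Open Scope classical_set_scope.
Local Close Scope ereal_scope.

Local Notation mu := (@lebesgue_measure R).
Definition Sg (y : R) : R := (1 + expR (2 * y))^-1.

Lemma Sg_ge0 y : (0 <= Sg y)%R.
Proof. by rewrite /Sg invr_ge0 addr_ge0 // expR_ge0. Qed.

Lemma Sg_le1 y : (Sg y <= 1)%R.
Proof. by rewrite /Sg invf_le1 ?lerDl ?expR_ge0 // ltr_wpDr // expR_ge0. Qed.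

Lemma tanh_Sg y : tanh y = (1 - 2 * Sg y)%R.
Proof.
rewrite /tanh /Sg expRN expRM_natl.
have E0 : (expR y != 0)%R by rewrite gt_eqF // expR_gt0.
have E1 : (1 + expR y ^+ 2 != 0)%R.
  by rewrite gt_eqF // ltr_wpDr // ?exprn_ge0 // expR_ge0.
have E2 : (expR y + (expR y)^-1 != 0)%R.
  by rewrite gt_eqF // addr_gt0 // ?invr_gt0 expR_gt0.
field.
by apply/andP; split => //; apply/andP; split => //.
Qed.

Lemma SgA y : (2 * Sg y <= expR (- y))%R.
Proof.
rewrite -subr_ge0 /Sg expRN expRM_natl.
have E0 : (expR y != 0)%R by rewrite gt_eqF // expR_gt0.
have E1 : (1 + expR y ^+ 2 != 0)%R.
  by rewrite gt_eqF // ltr_wpDr // ?exprn_ge0 // expR_ge0.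
rewrite (_ : _ - _ = (expR y - 1) ^+ 2 / (expR y * (1 + expR y ^+ 2)))%R.
  by rewrite divr_ge0 ?sqr_ge0 // mulr_ge0 ?expR_ge0 // addr_ge0 ?exprn_ge0 ?expR_ge0.
by field; rewrite E0 E1.
Qed.

Lemma SgB y z : (0 <= z)%R -> (z <= 2 * y)%R ->
  (Sg y + Sg (- y) * expR (- (2 * z)) <= expR (- z))%R.
Proof.
move=> z0 zy.
rewrite -subr_ge0 /Sg.
have -> : expR (2 * - y) = (expR (2 * y))^-1 by rewrite mulrN expRN.
have -> : expR (- (2 * z)) = (expR (- z)) ^+ 2.
  by rewrite -expRM_natl mulrN.
set E := expR (2 * y); set u := expR (- z).
have E0 : (0 < E)%R by exact: expR_gt0.
have u0 : (0 < u)%R by exact: expR_gt0.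
have u1 : (u <= 1)%R by rewrite expR_le1 oppr_le0.
have uE : (1 <= u * E)%R.
  by rewrite /u /E -expRD -[X in X <= _]expR0 ler_expR addrC subr_ge0.
have -> : u - ((1 + E)^-1 + (1 + E^-1)^-1 * u ^+ 2) = (1 - u) * (u * E - 1) / (1 + E).
  by field; rewrite !gt_eqF // ?addr_gt0.
apply: divr_ge0; last by rewrite addr_ge0 // ltW.
by apply: mulr_ge0; rewrite subr_ge0.
Qed.

Lemma pdf_refl (m s x : R) : (s != 0)%R ->
  (normal_pdf m s (- x) = expR (- (2 * (m / s ^+ 2) * x)) * normal_pdf m s x)%R.
Proof.
move=> s0; rewrite /normal_pdf (negbTE s0) /normal_fun.
rewrite [RHS]mulrCA -!expRD; congr (_ * expR _)%R.
rewrite -mulr_natr; field.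
by [].
Qed.

Local Open Scope ereal_scope.


Lemma np_int (m s : R) (g : R -> \bar R) : (forall x, (0 <= g x)%E) ->
  measurable_fun [set: R] g ->
  (\int[normal_prob m s]_x (g x : \bar R) = \int[mu]_x (g x * (normal_pdf m s x)%:E))%E.
Proof.
move=> g0 mg.
have dom := normal_prob_dominates m s.
rewrite -(Radon_Nikodym_SigmaFinite.change_of_variables dom)//.
apply: ae_eq_integral => //.
- apply: emeasurable_funM => //.
  exact: measurable_int (Radon_Nikodym_SigmaFinite.f_integrable dom).
- apply: emeasurable_funM => //; apply/measurableT_comp => //.
  exact: measurable_normal_pdf.
- apply: ae_eqe_mul2l => /=.
  apply: integral_ae_eq => //.
  + exact: Radon_Nikodym_SigmaFinite.f_integrable.
  + by apply/measurableT_comp => //; exact: measurable_normal_pdf.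
  + by move=> E _ mE; rewrite -Radon_Nikodym_SigmaFinite.f_integral.
Qed.


Lemma pdf_shift (m s t x : R) : (s != 0)%R ->
  (expR (t * x) * normal_pdf m s x =
   expR (t * m + t ^+ 2 * s ^+ 2 / 2) * normal_pdf (m + t * s ^+ 2) s x)%R.
Proof.
move=> s0; rewrite /normal_pdf (negbTE s0) /normal_fun.
rewrite mulrCA [RHS]mulrCA -!expRD; congr (_ * expR _)%R.
rewrite -mulr_natr; field.
by [].
Qed.

Lemma mgf (m s t : R) : (s != 0)%R ->
  \int[mu]_x (expR (t * x) * normal_pdf m s x)%:E =
  (expR (t * m + t ^+ 2 * s ^+ 2 / 2))%:E.
Proof.
move=> s0.
under eq_integral do rewrite pdf_shift // EFinM.
rewrite ge0_integralZl//=.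
- by rewrite integral_normal_pdf mule1.
- apply/measurable_EFinP; exact: measurable_normal_pdf.
- by move=> x _; rewrite lee_fin normal_pdf_ge0.
Qed.

Lemma sym_int (P : R -> R) : continuous P -> (forall x, 0 <= P x)%R ->
  \int[mu]_x (P x)%:E = \int[mu]_(x in `[0%R, +oo[) (P x + P (- x)%R)%:E.
Proof.
move=> cP P0.
have mP : measurable_fun [set: R] P by exact: continuous_measurable_fun.
have mPN : measurable_fun [set: R] (fun x => P (- x)%R).
  apply: continuous_measurable_fun => x.
  by apply: continuous_comp; [exact: opp_continuous|exact: cP].
have -> : [set: R] = `]-oo, 0%R] `|` `]0%R, +oo[.
  apply/seteqP; split => x //= _.
  by rewrite !in_itv /= andbT; case: (leP x 0%R) => _; [left|right].
rewrite ge0_integral_setU //=; last 3 first.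
- by apply/measurable_EFinP; exact: measurable_funTS.
- by move=> x _; rewrite lee_fin.
- apply/disj_setPS => x [] /=; rewrite !in_itv /= andbT => x0 x0'.
  by move: (lt_le_trans x0' x0); rewrite ltxx.
rewrite -{1}oppr0 ge0_integration_by_substitutionNy; last 2 first.
- exact: continuous_subspaceT.
- by move=> x _; exact: P0.
rewrite integral_itv_obnd_cbnd; last first.
  by apply/measurable_EFinP; exact: measurable_funTS.
rewrite addeC -ge0_integralD //=.
all: try (by move=> x _; rewrite lee_fin).
all: by apply/measurable_EFinP; exact: measurable_funTS.
Qed.

Local Close Scope ereal_scope.
Lemma Sg_cont (c : R) : continuous (fun x : R => Sg (c * x)).
Proof.
move=> x; rewrite /Sg; apply: (@continuousV _ _ (fun x => 1 + expR (2 * (c * x)))).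
  by rewrite gt_eqF // ltr_wpDr // expR_gt0.
apply: continuousD; first exact: cst_continuous.
apply: continuous_comp; last exact: continuous_expR.
apply: continuousM; first exact: cst_continuous.
apply: continuousM; first exact: cst_continuous.
exact: cvg_id.
Qed.

End Helpers.

Theorem lemma2 (R : realType) (alpha beta sigma : R)
  (ha : 0 < alpha) (hb : 0 < beta) (hs : 0 < sigma) :
  ((1 - expR (- (Num.min alpha beta * alpha) / (2 * sigma ^+ 2)))%:E
   <= \int[normal_prob alpha sigma]_x (tanh (beta * x / sigma ^+ 2))%:E)%E.
Proof.
have s0 : sigma != 0 by rewrite gt_eqF.
have s2 : 0 < sigma ^+ 2 by rewrite exprn_gt0.
set c := beta / sigma ^+ 2.
have c0 : 0 < c by rewrite divr_gt0.
have cx x : beta * x / sigma ^+ 2 = c * x by rewrite mulrAC mulrC.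
set pdf := normal_pdf alpha sigma.
have pdf0 x : 0 <= pdf x by exact: normal_pdf_ge0.
have mpdf : measurable_fun [set: R] pdf by exact: measurable_normal_pdf.
have mS : measurable_fun [set: R] (fun x => Sg (c * x)).
  exact: continuous_measurable_fun (Sg_cont c).
set I := (\int[lebesgue_measure]_x (Sg (c * x) * pdf x)%:E)%E.
have I0 : (0 <= I)%E.
  by apply: integral_ge0 => x _; rewrite lee_fin mulr_ge0 // Sg_ge0.
have step1 : (\int[normal_prob alpha sigma]_x (tanh (beta * x / sigma ^+ 2))%:E
   = 1 - 2%:E * I)%E.
  have fin : (normal_prob alpha sigma [set: R] < +oo)%E.
    by rewrite probability_setT ltry.
  have bS k : [bounded k * Sg (c * x) | x in [set: R]].
    exists `|k|; split; first exact: num_real.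
    move=> M kM x _ /=; rewrite (le_trans _ (ltW kM)) // normrM.
    rewrite ler_piMr // ger0_norm ?Sg_ge0 ?Sg_le1 //.
  have iS k : (normal_prob alpha sigma).-integrable [set: R]
      (EFin \o (fun x => k * Sg (c * x))).
    apply: measurable_bounded_integrable => //.
    exact: measurable_funM.
  have i1 : (normal_prob alpha sigma).-integrable [set: R]
      (EFin \o (fun x : R => 1)).
    exact: finite_measure_integrable_cst.
  under eq_integral do rewrite cx tanh_Sg EFinB.
  rewrite integralB_EFin //.
  rewrite (integral_cst (normal_prob alpha sigma) measurableT 1).
  rewrite [X in (1 * X)%E](_ : _ = 1%E); last exact: integral_normal_pdf.
  rewrite mul1e; congr (_ - _)%E.
  under eq_integral do rewrite EFinM.
  rewrite ge0_integralZl //.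
  all: try (by move=> x _; rewrite lee_fin Sg_ge0).
  all: try (by apply/measurable_EFinP).
  rewrite np_int //.
  all: try (by move=> x; rewrite lee_fin Sg_ge0).
  all: try (by apply/measurable_EFinP).
have step2 : exists K : R, (I <= (K / 2)%:E)%E /\
   K <= expR (- (Num.min alpha beta * alpha) / (2 * sigma ^+ 2)).
  have mP : measurable_fun [set: R] (fun x => Sg (c * x) * pdf x).
    exact: measurable_funM.
  have mQc : measurable_fun [set: R] (fun x => 2^-1 * (expR ((- c) * x) * pdf x)).
    apply: measurable_funM => //; apply: measurable_funM => //.
    apply: measurableT_comp => //; exact: measurable_funM.
  have mQc' : measurable_fun [set: R] (fun x => expR ((- c) * x) * pdf x).
    apply: measurable_funM => //.
    apply: measurableT_comp => //; exact: measurable_funM.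
  have [ab|ba] := leP beta alpha.
  - exists (expR ((- c) * alpha + (- c) ^+ 2 * sigma ^+ 2 / 2)); split.
      apply: (@le_trans _ _ (\int[lebesgue_measure]_x
          ((2^-1 : R) * (expR ((- c) * x) * pdf x))%:E)%E).
        apply: ge0_le_integral => //.
        - by move=> x _; rewrite lee_fin mulr_ge0 // Sg_ge0.
        - apply/measurable_EFinP; exact: mP.
        - apply/measurable_EFinP; exact: mQc.
        move=> x _; rewrite lee_fin.
        have E : expR (- c * x) = expR (- (c * x)) by rewrite mulNr.
        rewrite E; move: (SgA (c * x)) (pdf0 x); nra.
      under eq_integral do rewrite EFinM.
      rewrite ge0_integralZl //.
      all: try (by move=> x _; rewrite lee_fin mulr_ge0 // expR_ge0).
      all: try (by rewrite lee_fin invr_ge0).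
      2: by apply/measurable_EFinP; exact: mQc'.
      by rewrite mgf // -EFinM mulrC.
    rewrite ler_expR -subr_ge0.
    have -> : - (beta * alpha) / (2 * sigma ^+ 2) -
        ((- c) * alpha + (- c) ^+ 2 * sigma ^+ 2 / 2) =
        beta * (alpha - beta) / (2 * sigma ^+ 2).
      by rewrite /c; field.
    by rewrite divr_ge0 ?mulr_ge0 ?subr_ge0 // ltW.
  - set a := alpha / sigma ^+ 2.
    have a0 : 0 < a by rewrite divr_gt0.
    have ac : a <= 2 * c.
      rewrite /a /c mulrA ler_pM2r ?invr_gt0 //; lra.
    have mQa : measurable_fun [set: R] (fun x => expR ((- a) * x) * pdf x).
      apply: measurable_funM => //.
      apply: measurableT_comp => //; exact: measurable_funM.
    exists (expR ((- a) * alpha + (- a) ^+ 2 * sigma ^+ 2 / 2)); split.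
      have cP : continuous (fun x => Sg (c * x) * pdf x).
        move=> x; apply: (continuousM (s:=fun x => Sg (c * x)) (t:=pdf)).
          exact: Sg_cont.
        exact: continuous_normal_pdf.
      have cQ : continuous (fun x => 2^-1 * (expR ((- a) * x) * pdf x)).
        move=> x; apply: (continuousM (s:=fun=> 2^-1)
            (t:=fun x => expR ((- a) * x) * pdf x)); first exact: cst_continuous.
        apply: (continuousM (s:=fun x => expR ((- a) * x)) (t:=pdf)); last first.
          exact: continuous_normal_pdf.
        apply: (continuous_comp (f:=fun x => (- a) * x) (g:=expR)).
          apply: (continuousM (s:=fun=> - a) (t:=id)); first exact: cst_continuous.
          exact: cvg_id.
        exact: continuous_expR.
      have P0 x : 0 <= Sg (c * x) * pdf x by rewrite mulr_ge0 // Sg_ge0.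
      have Q0 x : 0 <= 2^-1 * (expR ((- a) * x) * pdf x).
        by rewrite mulr_ge0 ?invr_ge0 // mulr_ge0 // expR_ge0.
      rewrite /I (@sym_int _ _ cP P0).
      apply: (@le_trans _ _ (\int[lebesgue_measure]_(x in `[0%R, +oo[)
          (2^-1 * (expR ((- a) * x) * pdf x) +
           2^-1 * (expR ((- a) * (- x)) * pdf (- x)))%:E)%E).
        apply: ge0_le_integral => //.
        - by move=> x _; rewrite lee_fin addr_ge0.
        - apply/measurable_EFinP; apply: measurable_funTS.
          apply: continuous_measurable_fun => x.
          apply: (continuousD (f:=fun x => Sg (c * x) * pdf x)
                    (g:=fun x => Sg (c * - x) * pdf (- x))); first exact: cP.
          apply: (continuous_comp (f:=fun x => - x)
                    (g:=fun x => Sg (c * x) * pdf x)); last exact: cP.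
          exact: opp_continuous.
        - apply/measurable_EFinP; apply: measurable_funTS.
          apply: continuous_measurable_fun => x.
          apply: (continuousD (f:=fun x => 2^-1 * (expR ((- a) * x) * pdf x))
                    (g:=fun x => 2^-1 * (expR ((- a) * - x) * pdf (- x)))); first exact: cQ.
          apply: (continuous_comp (f:=fun x => - x)
                    (g:=fun x => 2^-1 * (expR ((- a) * x) * pdf x))); last exact: cQ.
          exact: opp_continuous.
        move=> x; rewrite /= in_itv /= andbT => x0.
        rewrite lee_fin.
        have ax0 : 0 <= a * x by rewrite mulr_ge0 // ltW.
        have axc : a * x <= 2 * (c * x) by rewrite mulrA ler_wpM2r.
        have e1 : pdf (- x) = expR (- (2 * (a * x))) * pdf x.
          by rewrite /pdf pdf_refl // -mulrA.
        have e2 : c * - x = - (c * x) by rewrite mulrN.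
        have e3 : - a * - x = a * x by rewrite mulrNN.
        have e4 : - a * x = - (a * x) by rewrite mulNr.
        have e5 : expR (a * x) * (expR (- (2 * (a * x))) * pdf x) =
            expR (- (a * x)) * pdf x.
          by rewrite mulrA -expRD; congr (expR _ * _); ring.
        rewrite e1 e2 e3 e4 e5.
        have h := ler_wpM2r (pdf0 x) (@SgB _ (c * x) (a * x) ax0 axc).
        nra.
      rewrite -(@sym_int _ _ cQ Q0).
      under eq_integral do rewrite EFinM.
      rewrite ge0_integralZl //.
      all: try (by move=> x _; rewrite lee_fin mulr_ge0 // expR_ge0).
      all: try (by rewrite lee_fin invr_ge0).
      2: by apply/measurable_EFinP; exact: mQa.
      by rewrite mgf // -EFinM mulrC.
    rewrite ler_expR le_eqVlt; apply/orP; left; apply/eqP.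
    by rewrite /a; field.
case: step2 => K [IK KE].
rewrite step1.
have If : I \is a fin_num.
  by rewrite ge0_fin_numE // (le_lt_trans IK) // ltry.
rewrite -(fineK If) -EFinM -EFinB lee_fin.
have : fine I <= K / 2 by rewrite -lee_fin fineK.
lra.
Qed.
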